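(* Let $f(x)=\sum_{i=0}^d a_ix^i\in k[x]$ satisfy condition $(\ast)$. Then there exists a dense open subset $U_f\subseteq\mathbb G_{m,k}$ (with coordinate $s$) such that for all $s\in U_f$ the degree of an Artin–Schreier reduced form of $sf(x)$ is constant and equal to $e(f):=\max\{ i_{\hat p} : 1\le i\le d,\ a_i\neq 0\}$.
   Context: Let $p$ be a prime and $k$ a finite field of characteristic $p$. Condition $(\ast)$ on $f=\sum a_ix^i$: there exists an integer $i>0$ which is not a power of $p$ with $a_i\neq 0$. For a positive integer $n$, $n_{\hat p}$ denotes its prime-to-$p$ part. Two polynomials in $k[x]$ (or $\bar k[x]$) are Artin–Schreier equivalent if their difference is of the form $h^p-h$ for some polynomial $h$. A polynomial $g=\sum b_ix^i$ is an Artin–Schreier reduced form of $f$ if it is Artin–Schreier equivalent to $f$ and $b_i=0$ for every $i>0$ divisible by $p$ (it is unique up to adding a constant). *)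

(* Defs.v *)
From HB Require Import structures.
From mathcomp Require Import all_boot all_order all_algebra all_field.
Set Implicit Arguments. Unset Strict Implicit. Unset Printing Implicit Defensive.
Import GRing.Theory.
Local Open Scope ring_scope.

Definition AS_equiv (R : comNzRingType) (p : nat) (f g : {poly R}) : Prop :=
  exists h : {poly R}, f - g = h ^+ p - h.

Definition AS_reduced_form (R : comNzRingType) (p : nat) (f g : {poly R}) : Prop :=
  AS_equiv p f g /\ (forall i : nat, (0 < i)%N -> (p %| i)%N -> g`_i = 0).

Definition cond_star (R : nzRingType) (p : nat) (f : {poly R}) : Prop :=
  exists i : nat, [/\ (0 < i)%N, ~ (exists j : nat, i = p ^ j)%N & f`_i != 0].

Definition e_of (R : nzRingType) (p : nat) (f : {poly R}) : nat :=
  \max_(1 <= i < size f | f`_i != 0) (i`_p^')%N.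

(* Main.v *)
Require Import Defs.
From HB Require Import structures.
From mathcomp Require Import all_boot all_order all_algebra all_field.
From mathcomp Require Import ring.
Import GRing.Theory.
Local Open Scope ring_scope.

Section Frob.
Variables (L : fieldType) (p : nat).
Hypotheses (pr : prime p) (chL : p \in [pchar L]).

Lemma frobD (R : comNzRingType) (ch : p \in [pchar R]) (x y : R) :
  (x + y) ^+ p = x ^+ p + y ^+ p.
Proof. exact: (rmorphD (pFrobenius_aut ch) x y). Qed.

Lemma frobN (R : comNzRingType) (ch : p \in [pchar R]) (x : R) :
  (- x) ^+ p = - x ^+ p.
Proof. exact: (rmorphN (pFrobenius_aut ch) x). Qed.

Lemma frobB (R : comNzRingType) (ch : p \in [pchar R]) (x y : R) :
  (x - y) ^+ p = x ^+ p - y ^+ p.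
Proof. exact: (rmorphB (pFrobenius_aut ch) x y). Qed.

Lemma p_gt0 : (0 < p)%N. Proof. exact: prime_gt0. Qed.
Lemma p_gt1 : (1 < p)%N. Proof. exact: prime_gt1. Qed.

Lemma chP : p \in [pchar {poly L}]. Proof. by rewrite pchar_poly. Qed.

Lemma coef_expp (h : {poly L}) i :
  (h ^+ p)`_i = if (p %| i)%N then h`_(i %/ p) ^+ p else 0.
Proof.
rewrite -{1}[h]coefK poly_def.
have -> : (\sum_(k < size h) h`_k *: 'X^k) ^+ p =
   \sum_(k < size h) h`_k ^+ p *: 'X^(k * p).
  transitivity (pFrobenius_aut chP (\sum_(k < size h) h`_k *: 'X^k)); first by [].
  rewrite rmorph_sum; apply: eq_bigr => k _.
  rewrite exprM -exprZn; exact: (pFrobenius_autE chP).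
rewrite coef_sumMXn/=; case: dvdnP => [[j ->]|nD]; last first.
  by rewrite big1// => j /eqP ?; case: nD; exists j.
under eq_bigl do rewrite eqn_mul2r gtn_eqF ?p_gt0// orFb.
rewrite (big_ord1_eq _ (fun j => h`_j ^+ p)) mulnK ?p_gt0//; case: ltnP => // /(nth_default 0)->.
by rewrite expr0n gtn_eqF ?p_gt0.
Qed.

Fixpoint Tr (j : nat) (P : {poly L}) (M : nat) : L :=
  match M with 0 => P`_j | M'.+1 => Tr j P M' ^+ p + P`_(p ^ M'.+1 * j) end.

Lemma TrB j P Q M : Tr j (P - Q) M = Tr j P M - Tr j Q M.
Proof.
elim: M => [|M IH] /=; first by rewrite coefB.
by rewrite IH frobB // coefB; ring.
Qed.

Lemma Tr_AS j (pj : ~~ (p %| j)%N) h M : Tr j (h ^+ p - h) M = - h`_(p ^ M * j).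
Proof.
elim: M => [|M IH] /=; first by rewrite coefB coef_expp expn0 mul1n (negPf pj) sub0r.
rewrite IH coefB coef_expp frobN // expnS -mulnA dvdn_mulr // mulKn ?p_gt0 //.
ring.
Qed.

Lemma Tr_red j (j0 : (0 < j)%N) (g : {poly L})
  (red : forall i, (0 < i)%N -> (p %| i)%N -> g`_i = 0) M :
  Tr j g M = g`_j ^+ (p ^ M).
Proof.
elim: M => [|M IH] /=; first by rewrite expn0 expr1.
rewrite IH (red (p ^ M.+1 * j)%N); last by rewrite expnS -mulnA dvdn_mulr.
  by rewrite addr0 expnSr exprM.
by rewrite muln_gt0 expn_gt0 p_gt0 j0.
Qed.

Fixpoint Qp (F : {poly L}) (j : nat) (M : nat) : {poly L} :=
  match M with 0 => (F`_j)%:P * 'X | M'.+1 => Qp F j M' ^+ p + (F`_(p ^ M'.+1 * j))%:P * 'X end.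

Lemma Tr_Qp F j s M : Tr j (s *: F) M = (Qp F j M).[s].
Proof.
elim: M => [|M IH] /=; first by rewrite coefZ hornerCM hornerX mulrC.
by rewrite IH hornerD horner_exp coefZ hornerCM hornerX mulrC.
Qed.

Lemma Qp_coef1 F j M : (Qp F j M)`_1 = F`_(p ^ M * j).
Proof.
case: M => [|M] /=; first by rewrite coefCM coefX mulr1 expn0 mul1n.
rewrite coefD coef_expp coefCM coefX mulr1.
by rewrite dvdn1 gtn_eqF ?p_gt1 // add0r.
Qed.

Lemma Qp_neq0 (F : {poly L}) j M m : (m <= M)%N -> F`_(p ^ m * j) != 0 -> Qp F j M != 0.
Proof.
elim: M m => [|M IH] m.
  by rewrite leqn0 => /eqP -> Fm; apply/eqP => Q0; move: Fm; rewrite -(Qp_coef1 F j 0) Q0 coef0 eqxx.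
move=> le Fm; case: (boolP (F`_(p ^ M.+1 * j) == 0)) => [/eqP F0|FM]; last first.
  by apply/eqP => Q0; move: FM; rewrite -Qp_coef1 Q0 coef0 eqxx.
have lt : (m <= M)%N.
  rewrite leq_eqVlt in le; case/orP: le => [/eqP Em|//]; by move: Fm; rewrite Em F0 eqxx.
by rewrite /= F0 mul0r addr0 expf_neq0 // (IH m).
Qed.

Lemma Qp_stab (F : {poly L}) j M0 (Z : forall m, (M0 < m)%N -> F`_(p ^ m * j) = 0) N :
  Qp F j (M0 + N) = Qp F j M0 ^+ (p ^ N).
Proof.
elim: N => [|N IH]; first by rewrite addn0 expn0 expr1.
by rewrite addnS /= IH Z ?ltnS ?leq_addr // mul0r addr0 -exprM expnSr.
Qed.

End Frob.
Section Exist.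
Variables (L : closedFieldType) (p : nat).
Hypotheses (pr : prime p) (chL : p \in [pchar L]).

Lemma ex_red (F : {poly L}) : exists g, AS_reduced_form p F g.
Proof.
suff H : forall n (F : {poly L}),
    (forall i, (n <= i)%N -> (0 < i)%N -> (p %| i)%N -> F`_i = 0) ->
    exists g, AS_reduced_form p F g.
  by apply: (H (size F)) => i Hi _ _; apply: nth_default.
elim=> [|n IH] F0 HF.
  exists F0; split; last by move=> i i0 pi; apply: HF.
  by exists 0; rewrite subrr expr0n gtn_eqF ?prime_gt0 // subr0.
case: (boolP [&& (0 < n)%N, (p %| n)%N & F0`_n != 0]) => [/and3P [n0 pn Fn]|Hn].
  have [c Hc] : exists c : L, c ^+ p = F0`_n.
    have /closed_rootP [c rc] : size ('X^p - (F0`_n)%:P : {poly L}) != 1.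
      by rewrite size_XnsubC ?prime_gt0 // eqSS -lt0n prime_gt0.
    by exists c; move: rc; rewrite /root !hornerE subr_eq0 => /eqP.
  set h1 : {poly L} := c *: 'X^(n %/ p).
  have h1p : h1 ^+ p = F0`_n *: 'X^n.
    by rewrite /h1 exprZn -exprM divnK // Hc.
  have ltn : (n %/ p < n)%N by apply: ltn_Pdiv; rewrite ?prime_gt1.
  have [g [[h2 E2] red]] : exists g, AS_reduced_form p (F0 - (h1 ^+ p - h1)) g.
    apply: IH => i ni i0 pi.
    rewrite coefB coefB h1p coefZ coefXn /h1 coefZ coefXn.
    case: (ltngtP i n) ni => // [lt|<-] _.
      rewrite (HF i) // (gtn_eqF (ltn_trans ltn lt)).
      by rewrite !mulr0 subrr subr0.
    by rewrite (gtn_eqF (ltn_Pdiv (prime_gt1 pr) i0)) mulr1 mulr0 subr0 subrr.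
  exists g; split => //; exists (h1 + h2).
  rewrite (@frobD p _ (@chP _ _ chL)).
  have -> : F0 - g = (h1 ^+ p - h1) + (F0 - (h1 ^+ p - h1) - g) by ring.
  rewrite E2; ring.
apply: IH => i ni i0 pi; case: (ltngtP i n) ni => // [lt|En] _.
  by apply: HF.
by move: Hn; rewrite -En i0 pi /= negbK => /eqP.
Qed.

End Exist.

Lemma bigmax_att (r : seq nat) (P : pred nat) (F : nat -> nat) :
  has P r -> exists2 i, (i \in r) && P i & \max_(i <- r | P i) F i = F i.
Proof.
elim: r => // x r IH /=; rewrite big_cons.
case: (boolP (P x)) => Px /=.
  case: (boolP (has P r)) => hr _.
    have [i /andP[ir Pi] ->] := IH hr.
    case: (leqP (F i) (F x)) => le.
      by exists x; rewrite ?mem_head ?Px.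
    by exists i; rewrite ?in_cons ?ir ?orbT ?Pi.
  by exists x; [rewrite mem_head Px | rewrite big_hasC // maxn0].
move=> hr; have [i /andP[ir Pi] ->] := IH hr; exists i => //.
by rewrite in_cons ir orbT Pi.
Qed.

Theorem mainTheorem1 (k : finFieldType) (p : nat) (f : {poly k})
    (L : closedFieldType) (iota : {rmorphism k -> L}) :
  prime p -> p \in [pchar k] ->
  integralRange iota ->
  cond_star p f ->
  exists S : seq L,
    forall s : L, s != 0 -> s \notin S ->
      (exists g : {poly L}, AS_reduced_form p (s *: map_poly iota f) g) /\
      (forall g : {poly L}, AS_reduced_form p (s *: map_poly iota f) g ->
         (size g).-1 = e_of p f).
Proof.
move=> pr chk _ [i0 [i00 npow fi0]].
have chL : p \in [pchar L] by apply: (rmorph_pchar iota).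
have p0 := prime_gt0 pr; have p1 := prime_gt1 pr.
set F0 := map_poly iota f.
set e := e_of p f.
have coefF : forall i, F0`_i = iota f`_i by move=> i; rewrite coef_map.
have F0nz : forall i, (F0`_i != 0) = (f`_i != 0) by move=> i; rewrite coefF fmorph_eq0.
have ltsz : forall i, f`_i != 0 -> (i < size f)%N.
  by move=> i fi; case: ltnP => // /(nth_default 0) hf; rewrite hf eqxx in fi.
have E2 : forall i, (0 < i)%N -> f`_i != 0 -> (i`_p^' <= e)%N.
  move=> i i1 fi; rewrite /e /e_of.
  have := @leq_bigmax_seq nat (index_iota 1 (size f)) (fun i => f`_i != 0) (fun i => (i`_p^')%N) i.
  rewrite mem_index_iota i1 ltsz //=; apply => //.
have [i1 /andP [i1in fi1] Ee] : exists2 i, (i \in index_iota 1 (size f)) && (f`_i != 0) & e = (i`_p^')%N.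
  apply: bigmax_att; apply/hasP; exists i0 => //.
  by rewrite mem_index_iota i00 ltsz.
have i1pos : (0 < i1)%N by move: i1in; rewrite mem_index_iota => /andP[].
have e0 : (0 < e)%N by rewrite Ee part_gt0.
have pe : ~~ (p %| e)%N by rewrite Ee -p'natE // part_pnat.
set m0 := logn p i1.
have Hi1 : i1 = (p ^ m0 * e)%N by rewrite Ee -p_part partnC.
have E3 : forall m j, (0 < j)%N -> ~~ (p %| j)%N -> ((p ^ m * j)`_p^' = j)%N.
  move=> m j j0 pj; rewrite partnM ?expn_gt0 ?p0 //.
  rewrite part_p'nat ?mul1n ?part_pnat_id ?p'natE //.
  by rewrite pnatNK pnatX pnat_id.
set M0 := size f.
have Z : forall m, (M0 < m)%N -> F0`_(p ^ m * e) = 0.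
  move=> m lt; rewrite coefF nth_default ?rmorph0 //.
  apply: leq_trans (ltnW lt) _; apply: leq_trans (ltnW (ltn_expl m p1)) _.
  exact: leq_pmulr.
set Q := Qp L p F0 e M0.
have Q0 : Q != 0.
  apply: (@Qp_neq0 _ _ pr chL _ _ _ m0).
    have : (i1 < size f)%N by rewrite ltsz.
    rewrite Hi1 => lt; apply: ltnW; apply: leq_ltn_trans lt.
    apply: leq_trans (ltnW (ltn_expl m0 p1)) _; exact: leq_pmulr.
  by rewrite F0nz -Hi1.
have [r Er] := closed_field_poly_normal Q.
exists r => s s0 sr.
split; first exact: ex_red.
move=> g [[h Eh] red].
have key : forall j M, ~~ (p %| j)%N -> Tr L p j (s *: F0) M - Tr L p j g M = - h`_(p ^ M * j).
  by move=> j M pj; rewrite -(@TrB _ _ chL) Eh (@Tr_AS _ _ pr chL).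
have hz : forall M j, (0 < j)%N -> (size h <= M)%N -> h`_(p ^ M * j) = 0.
  move=> M j j0 le; apply: nth_default; apply: leq_trans le _.
  apply: leq_trans (ltnW (ltn_expl M p1)) _; exact: leq_pmulr.
have up : forall j, (e < j)%N -> g`_j = 0.
  move=> j lt; have j0 : (0 < j)%N by apply: leq_ltn_trans lt.
  case: (boolP (p %| j)%N) => pj; first exact: red.
  have Fz : forall m, F0`_(p ^ m * j) = 0.
    move=> m; apply/eqP; apply: contraTT lt; rewrite F0nz -leqNgt => fm.
    by rewrite -(E3 m j j0 pj); apply: E2 => //; rewrite muln_gt0 expn_gt0 p0.
  have TF : forall M, Tr L p j (s *: F0) M = 0.
    elim => [|M IH] /=.
      by have := Fz 0%N; rewrite expn0 mul1n coefZ => ->; rewrite mulr0.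
    by rewrite IH expr0n gtn_eqF // coefZ Fz mulr0 add0r.
  have := key j (size h) pj.
  rewrite TF (@Tr_red _ _ pr _ j0 _ red) hz // sub0r oppr0 => /eqP.
  by rewrite oppr_eq0 expf_eq0 => /andP[_ /eqP].
have ge : g`_e != 0.
  have := key e (M0 + size h)%N pe.
  rewrite Tr_Qp (@Qp_stab _ _ _ _ _ Z) (@Tr_red _ _ pr _ e0 _ red) horner_exp hz ?leq_addl // oppr0.
  move/eqP; rewrite subr_eq0 => /eqP Eq.
  apply/negP => /eqP g0; move: Eq; rewrite g0 expr0n expn_eq0 gtn_eqF //= => /eqP.
  rewrite expf_eq0 => /andP [_ Qs]; move: sr; rewrite -root_prod_XsubC.
  rewrite -(rootZ _ _ (_ : lead_coef Q != 0)) ?lead_coef_eq0 // -Er.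
  by rewrite /root Qs.
have sz1 : (size g <= e.+1)%N by apply/leq_sizeP => j; apply: up.
have sz2 : (e < size g)%N.
  by rewrite ltnNge; apply/negP => /(nth_default 0) hg; rewrite hg eqxx in ge.
have -> : size g = e.+1 by apply/eqP; rewrite eqn_leq sz1 sz2.
by [].
Qed.
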